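(* Let $U\subset\mathbb H$ be an axially symmetric open set with $U\cap\mathbb R=\emptyset$, and let $\tilde f$ be an axially harmonic function on $U$. Suppose that $\tilde f(q)=A(q_0,r)+\underline{\omega}\,B(q_0,r)$ for $q=q_0+r\underline{\omega}\in U$, $r>0$, $\underline{\omega}\in\mathbb S$, where $A,B$ are $\mathbb H$-valued functions of class $C^2$. Then $A$ and $B$ satisfy the system $$\partial_{q_0}^2A+\partial_r^2A+\frac{2}{r}\partial_rA=0,\qquad \partial_{q_0}^2B+\partial_r^2B+\frac{2r\,\partial_rB-2B}{r^2}=0 .$$
   Context: $\mathbb H$ denotes the quaternions $q=q_0+q_1e_1+q_2e_2+q_3e_3$ with $e_1^2=e_2^2=e_3^2=-1$, $e_1e_2=-e_2e_1=e_3$, $e_2e_3=-e_3e_2=e_1$, $e_3e_1=-e_1e_3=e_2$; $\underline q=q_1e_1+q_2e_2+q_3e_3$, $\mathbb S=\{\underline q: q_1^2+q_2^2+q_3^2=1\}$. A set $U\subset\mathbb H$ is axially symmetric if $u+Iv\in U$ implies $u+Jv\in U$ for all $J\in\mathbb S$. The Fueter operator is $\mathcal D=\partial_{q_0}+\sum_{i=1}^3e_i\partial_{q_i}$ and $\Delta=\sum_{i=0}^3\partial_{q_i}^2$. A function $\tilde f$ on an axially symmetric open set $U$ (not meeting $\mathbb R$) is called axially harmonic if $\tilde f=\mathcal D f$ where $f:U\to\mathbb H$ is of class $C^3$ of the form $f(u+Jv)=\alpha(u,v)+J\beta(u,v)$ ($J\in\mathbb S$, $v>0$) with $\alpha,\beta$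 $\mathbb H$-valued, and $\Delta\tilde f=0$ on $U$. *)

(* Defs.v *)
(* Quaternions H are modelled as row vectors 'rV[R]_4
   (components q_0, q_1, q_2, q_3), with the quaternion product written out. *)
From HB Require Import structures.
From mathcomp Require Import all_boot all_order all_algebra.
From mathcomp Require Import all_classical all_reals all_analysis.
Set Implicit Arguments. Unset Strict Implicit. Unset Printing Implicit Defensive.
Import Order.TTheory GRing.Theory Num.Theory.
Import numFieldNormedType.Exports.
Local Open Scope classical_set_scope.
Local Open Scope ring_scope.

Section Quat.
Variable R : realType.

Definition mkq (a b c d : R) : 'rV[R]_4 := \row_(k < 4) [:: a; b; c; d]`_k.

Definition qc (q : 'rV[R]_4) (k : nat) : R := q ord0 (inord k).

Definition qe (i : 'I_4) : 'rV[R]_4 := delta_mx ord0 i.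

(* quaternion product, with e1e2 = e3, e2e3 = e1, e3e1 = e2, ei^2 = -1 *)
Definition qmul (p q : 'rV[R]_4) : 'rV[R]_4 :=
  mkq (qc p 0 * qc q 0 - qc p 1 * qc q 1 - qc p 2 * qc q 2 - qc p 3 * qc q 3)
      (qc p 0 * qc q 1 + qc p 1 * qc q 0 + qc p 2 * qc q 3 - qc p 3 * qc q 2)
      (qc p 0 * qc q 2 + qc p 2 * qc q 0 + qc p 3 * qc q 1 - qc p 1 * qc q 3)
      (qc p 0 * qc q 3 + qc p 3 * qc q 0 + qc p 1 * qc q 2 - qc p 2 * qc q 1).

Definition qreal (u : R) : 'rV[R]_4 := u *: qe 0.

Definition qax (u v : R) (J : 'rV[R]_4) : 'rV[R]_4 := qreal u + v *: J.

Definition qsphere : set 'rV[R]_4 :=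
  [set J | qc J 0 = 0 /\ qc J 1 ^+ 2 + qc J 2 ^+ 2 + qc J 3 ^+ 2 = 1].

Definition axially_symmetric (U : set 'rV[R]_4) : Prop :=
  forall (u v : R) (I J : 'rV[R]_4), qsphere I -> qsphere J ->
    U (qax u v I) -> U (qax u v J).

Definition partial (n : nat) (i : 'I_n) (f : 'rV[R]_n -> 'rV[R]_4)
  (x : 'rV[R]_n) : 'rV[R]_4 := 'D_(delta_mx ord0 i) f x.

Fixpoint Ck (n : nat) (k : nat) (U : set 'rV[R]_n)
  (f : 'rV[R]_n -> 'rV[R]_4) : Prop :=
  (forall x, U x -> {for x, continuous f}) /\
  match k with
  | 0 => True
  | k'.+1 => forall i : 'I_n,
      (forall x, U x -> derivable f x (delta_mx ord0 i)) /\
      Ck k' U (partial i f)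
  end.

Definition fueter (f : 'rV[R]_4 -> 'rV[R]_4) (q : 'rV[R]_4) : 'rV[R]_4 :=
  partial 0 f q + qmul (qe 1) (partial 1 f q) + qmul (qe 2) (partial 2 f q)
  + qmul (qe 3) (partial 3 f q).

Definition laplacian (g : 'rV[R]_4 -> 'rV[R]_4) (q : 'rV[R]_4) : 'rV[R]_4 :=
  \sum_(i < 4) partial i (partial i g) q.

Definition axially_harmonic (U : set 'rV[R]_4) (ft : 'rV[R]_4 -> 'rV[R]_4)
  : Prop :=
  exists f : 'rV[R]_4 -> 'rV[R]_4,
    Ck 3 U f /\
    (exists alpha beta : R -> R -> 'rV[R]_4,
       forall (u v : R) (J : 'rV[R]_4), qsphere J -> 0 < v -> U (qax u v J) ->
         f (qax u v J) = alpha u v + qmul J (beta u v)) /\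
    (forall q, U q -> ft q = fueter f q) /\
    (forall q, U q -> laplacian ft q = 0).

Definition pt2 (a b : R) : 'rV[R]_2 := \row_(k < 2) [:: a; b]`_k.

(* the set of (q0, r) with r > 0 and q0 + r w in U (for some, equivalently
   every by axial symmetry, w in S) *)
Definition axial_domain (U : set 'rV[R]_4) : set 'rV[R]_2 :=
  [set p | 0 < p ord0 (inord 1) /\
           exists w, qsphere w /\ U (qax (p ord0 (inord 0)) (p ord0 (inord 1)) w)].

End Quat.

(* Main.v *)
Require Import Defs.
From HB Require Import structures.
From mathcomp Require Import all_boot all_order all_algebra.
From mathcomp Require Import all_classical all_reals all_analysis.
From mathcomp Require Import ring lra.
Import Order.TTheory GRing.Theory Num.Theory.
Import numFieldNormedType.Exports.
Local Open Scope classical_set_scope.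
Local Open Scope ring_scope.
Set Implicit Arguments. Unset Strict Implicit. Unset Printing Implicit Defensive.

Section S.
Variable R : realType.

Lemma is_derive_mx (V : normedModType R) m n (M : V -> 'M[R]_(m,n)) t v (D : 'M[R]_(m,n)) :
  (forall i j, is_derive t v (fun x => M x i j) (D i j)) -> is_derive t v M D.
Proof.
move=> H.
have dM : derivable M t v by apply/derivable_mxP => i j; by case: (H i j).
apply: DeriveDef => //; rewrite derive_mx //; apply/matrixP => i j.
by rewrite mxE; by case: (H i j).
Qed.

Lemma is_derive_mx_comp (V : normedModType R) m n (M : V -> 'M[R]_(m,n)) t v (D : 'M[R]_(m,n)) i j :
  is_derive t v M D -> is_derive t v (fun x => M x i j) (D i j).
Proof.
move=> [dM <-].
have := (derivable_mxP M t v).1 dM i j => dij.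
by apply: DeriveDef => //; rewrite derive_mx // mxE.
Qed.

Lemma is_deriveZ_fun (h : R -> R) (H : R -> 'rV[R]_4) (t dh : R) (dH : 'rV[R]_4) :
  is_derive t 1 h dh -> is_derive t 1 H dH ->
  is_derive t 1 (fun s => h s *: H s) (h t *: dH + dh *: H t).
Proof.
move=> Dh DH; apply: is_derive_mx => i j.
have := is_derive_mx_comp i j DH => Dij.
have := is_deriveM Dh Dij.
rewrite !mxE => D'.
apply: is_derive_eq.
  apply: (near_eq_is_derive _ D'); near=> x; by rewrite mxE.
by rewrite /GRing.scale /= mulrC [dh * _]mulrC.
Unshelve. all: by end_near. Qed.
Lemma is_derive_ext (V W : normedModType R) (f g : V -> W) (x v : V) (df : W) :
  (forall s, f s = g s) -> is_derive x v f df -> is_derive x v g df.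
Proof. by move=> fg; have -> : f = g by apply/funext. Qed.

Lemma is_derive_cont (W : normedModType R) (f : R -> W) (x : R) (df : W) :
  is_derive x 1 f df -> {for x, continuous f}.
Proof.
by move=> [df1 _]; apply/differentiable_continuous/derivable1_diffP.
Qed.

Lemma is_derive_comp_vec (rho : R -> R) (H : R -> 'rV[R]_4) (t drho : R) (dH : 'rV[R]_4) :
  is_derive t 1 rho drho -> is_derive (rho t) 1 H dH ->
  is_derive t 1 (fun s => H (rho s)) (drho *: dH).
Proof.
move=> Dr DH; apply: is_derive_mx => i j.
have := is_derive_mx_comp i j DH => Dij.
have := is_derive1_comp Dij Dr => D'.
rewrite mxE mulrC; exact: (is_derive_ext _ D').

Qed.

Lemma derive_line (n : nat) (F : 'rV[R]_n -> 'rV[R]_4) (a v : 'rV[R]_n) (t : R) :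
  'D_1 (fun s : R => F (a + s *: v)) t = 'D_v F (a + t *: v).
Proof.
rewrite /derive; set g1 := fun h => h^-1 *: _; set g2 := fun h => h^-1 *: _.
suff -> : g1 = g2 by [].
apply/funext => h; rewrite /g1 /g2 /=.
by rewrite [h *: 1]mulr1 scalerDl addrCA.
Qed.

Lemma derivable_line (n : nat) (F : 'rV[R]_n -> 'rV[R]_4) (a v : 'rV[R]_n) (t : R) :
  derivable (fun s : R => F (a + s *: v)) t 1 <-> derivable F (a + t *: v) v.
Proof.
rewrite /derivable; set g1 := fun h => h^-1 *: _; set g2 := fun h => h^-1 *: _.
suff -> : g1 = g2 by [].
apply/funext => h; rewrite /g1 /g2 /=.
by rewrite [h *: 1]mulr1 scalerDl addrCA.
Qed.

Definition D2 (f : R -> 'rV[R]_4) (x : R) (f1 : R -> 'rV[R]_4) (f2 : 'rV[R]_4) :=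
  (\forall s \near x, is_derive (s : R) 1 f (f1 s)) /\ is_derive x 1 f1 f2.

Definition D2s (f : R -> R) (x : R) (f1 : R -> R) (f2 : R) :=
  (\forall s \near x, is_derive (s : R) 1 f (f1 s)) /\ is_derive x 1 f1 f2.

Lemma D2_add f g x f1 g1 f2 g2 : D2 f x f1 f2 -> D2 g x g1 g2 ->
  D2 (fun s => f s + g s) x (fun s => f1 s + g1 s) (f2 + g2).
Proof.
move=> [Hf Hf2] [Hg Hg2]; split.
  move: Hf Hg; apply: filterS2 => s Ds Dg.
  have := is_deriveD Ds Dg; exact: is_derive_ext.
have := is_deriveD Hf2 Hg2; exact: is_derive_ext.
Qed.

Lemma D2_Z (h : R -> R) (H : R -> 'rV[R]_4) x h1 h2 H1 H2 : D2s h x h1 h2 -> D2 H x H1 H2 ->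
  D2 (fun s => h s *: H s) x (fun s => h s *: H1 s + h1 s *: H s)
     (h x *: H2 + h1 x *: H1 x + (h1 x *: H1 x + h2 *: H x)).
Proof.
move=> [Hh Hh2] [HH HH2]; split.
  move: Hh HH; apply: filterS2 => s Ds Dg; exact: is_deriveZ_fun Ds Dg.
have := is_deriveD (is_deriveZ_fun (nbhs_singleton Hh) HH2) (is_deriveZ_fun Hh2 (nbhs_singleton HH)).
exact: is_derive_ext.
Qed.

Lemma D2_comp (rho : R -> R) (H : R -> 'rV[R]_4) x y rho1 rho2 H1 H2 :
  rho x = y -> D2s rho x rho1 rho2 -> D2 H y H1 H2 ->
  D2 (fun s => H (rho s)) x (fun s => rho1 s *: H1 (rho s))
     (rho1 x *: (rho1 x *: H2) + rho2 *: H1 y).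
Proof.
move=> rxy [Hr Hr2] [HH HH2].
have cr : {for x, continuous rho} := is_derive_cont (nbhs_singleton Hr).
have HH' : \forall s \near x, is_derive (rho s) 1 H (H1 (rho s)).
  have HH0 : \forall z \near rho x, is_derive (z : R) 1 H (H1 z) by rewrite rxy.
  exact: (cr _ HH0).
split.
  move: (Hr) HH'; apply: filterS2 => s Ds Dg; exact: is_derive_comp_vec Ds Dg.
have := is_deriveZ_fun Hr2 (is_derive_comp_vec (nbhs_singleton Hr) (eq_ind_r (fun z : R => is_derive z 1 H1 H2) HH2 rxy)).
rewrite rxy; exact: is_derive_ext.
Qed.
Lemma qc_mkq0 a b c d : qc (mkq a b c d : 'rV[R]_4) 0 = a.
Proof. by rewrite /qc /mkq mxE inordK. Qed.
Lemma qc_mkq1 a b c d : qc (mkq a b c d : 'rV[R]_4) 1 = b.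
Proof. by rewrite /qc /mkq mxE inordK. Qed.
Lemma qc_mkq2 a b c d : qc (mkq a b c d : 'rV[R]_4) 2 = c.
Proof. by rewrite /qc /mkq mxE inordK. Qed.
Lemma qc_mkq3 a b c d : qc (mkq a b c d : 'rV[R]_4) 3 = d.
Proof. by rewrite /qc /mkq mxE inordK. Qed.

Lemma qeqP (X Y : 'rV[R]_4) : qc X 0 = qc Y 0 -> qc X 1 = qc Y 1 ->
  qc X 2 = qc Y 2 -> qc X 3 = qc Y 3 -> X = Y.
Proof.
move=> h0 h1 h2 h3; apply/rowP => k; rewrite -(inord_val k).
by case: k => [[|[|[|[|m]]]] Hm].
Qed.

Lemma p2eqP (X Y : 'rV[R]_2) : X ord0 (inord 0) = Y ord0 (inord 0) ->
  X ord0 (inord 1) = Y ord0 (inord 1) -> X = Y.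
Proof.
move=> h0 h1; apply/rowP => k; rewrite -(inord_val k).
by case: k => [[|[|m]] Hm].
Qed.

Lemma pt2_0 (a b : R) : pt2 a b ord0 (inord 0) = a.
Proof. by rewrite /pt2 mxE inordK. Qed.
Lemma pt2_1 (a b : R) : pt2 a b ord0 (inord 1) = b.
Proof. by rewrite /pt2 mxE inordK. Qed.
Lemma e2_00 : (delta_mx ord0 (0 : 'I_2) : 'rV[R]_2) ord0 (inord 0) = 1.
Proof. by rewrite mxE; (have -> : inord 0 = 0 :> 'I_2 by apply: val_inj; rewrite /= inordK). Qed.
Lemma e2_01 : (delta_mx ord0 (0 : 'I_2) : 'rV[R]_2) ord0 (inord 1) = 0.
Proof. by rewrite mxE; (have -> : inord 1 = 1 :> 'I_2 by apply: val_inj; rewrite /= inordK). Qed.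
Lemma e2_10 : (delta_mx ord0 (1 : 'I_2) : 'rV[R]_2) ord0 (inord 0) = 0.
Proof. by rewrite mxE; (have -> : inord 0 = 0 :> 'I_2 by apply: val_inj; rewrite /= inordK). Qed.
Lemma e2_11 : (delta_mx ord0 (1 : 'I_2) : 'rV[R]_2) ord0 (inord 1) = 1.
Proof. by rewrite mxE; (have -> : inord 1 = 1 :> 'I_2 by apply: val_inj; rewrite /= inordK). Qed.

Lemma qcD (X Y : 'rV[R]_4) m : qc (X + Y) m = qc X m + qc Y m.
Proof. by rewrite /qc mxE. Qed.
Lemma qcB (X Y : 'rV[R]_4) m : qc (X - Y) m = qc X m - qc Y m.
Proof. by rewrite /qc !mxE. Qed.
Lemma qcN (X : 'rV[R]_4) m : qc (- X) m = - qc X m.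
Proof. by rewrite /qc mxE. Qed.
Lemma qcZ (k : R) (X : 'rV[R]_4) m : qc (k *: X) m = k * qc X m.
Proof. by rewrite /qc mxE. Qed.
Lemma qc0 m : qc (0 : 'rV[R]_4) m = 0.
Proof. by rewrite /qc mxE. Qed.

Lemma qe_mkq0 : qe R 0 = mkq 1 0 0 0 :> 'rV[R]_4.
Proof. apply/rowP => k; rewrite !mxE; case: k => [[|[|[|[|m]]]] Hm] //. Qed.
Lemma qe_mkq1 : qe R 1 = mkq 0 1 0 0 :> 'rV[R]_4.
Proof. apply/rowP => k; rewrite !mxE; case: k => [[|[|[|[|m]]]] Hm] //. Qed.
Lemma qe_mkq2 : qe R 2 = mkq 0 0 1 0 :> 'rV[R]_4.
Proof. apply/rowP => k; rewrite !mxE; case: k => [[|[|[|[|m]]]] Hm] //. Qed.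
Lemma qe_mkq3 : qe R 3 = mkq 0 0 0 1 :> 'rV[R]_4.
Proof. apply/rowP => k; rewrite !mxE; case: k => [[|[|[|[|m]]]] Hm] //. Qed.

Definition qcE := (qc_mkq0, qc_mkq1, qc_mkq2, qc_mkq3, qcD, qcB, qcN, qcZ, qc0).

Lemma qmul_linr (J X : 'rV[R]_4) :
  qmul J X = qc X 0 *: qmul J (qe R 0) + qc X 1 *: qmul J (qe R 1)
           + qc X 2 *: qmul J (qe R 2) + qc X 3 *: qmul J (qe R 3).
Proof.
rewrite qe_mkq0 qe_mkq1 qe_mkq2 qe_mkq3 /qmul.
apply: qeqP; rewrite !qcE; ring.
Qed.
Lemma is_derive_qcZ (H : R -> 'rV[R]_4) (t : R) (dH C : 'rV[R]_4) m :
  is_derive t 1 H dH -> is_derive t 1 (fun s => qc (H s) m *: C) (qc dH m *: C).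
Proof.
move=> DH.
have Dm := is_derive_mx_comp ord0 (inord m) DH.
have := is_deriveZ_fun Dm (is_derive_cst C t 1).
rewrite scaler0 add0r; exact: is_derive_ext.
Qed.

Lemma is_derive_qmul (J : 'rV[R]_4) (H : R -> 'rV[R]_4) (t : R) (dH : 'rV[R]_4) :
  is_derive t 1 H dH -> is_derive t 1 (fun s => qmul J (H s)) (qmul J dH).
Proof.
move=> DH; rewrite qmul_linr.
apply: (is_derive_ext (fun s => esym (qmul_linr J (H s)))).
apply: is_deriveD; [apply: is_deriveD; [apply: is_deriveD|]|];
  exact: is_derive_qcZ.
Qed.

Lemma D2_qmul (J : 'rV[R]_4) H x H1 H2 : D2 H x H1 H2 ->
  D2 (fun s => qmul J (H s)) x (fun s => qmul J (H1 s)) (qmul J H2).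
Proof.
move=> [HH HH2]; split; last exact: is_derive_qmul.
by move: HH; apply: filterS => s; exact: is_derive_qmul.
Qed.
Section scal.
Implicit Types (f g : R -> R) (x a b : R).
Lemma sD f g x a b : is_derive x 1 f a -> is_derive x 1 g b ->
  is_derive x 1 (fun s => f s + g s) (a + b).
Proof. move=> Df Dg; have := is_deriveD Df Dg; exact: is_derive_ext. Qed.
Lemma sM f g x a b : is_derive x 1 f a -> is_derive x 1 g b ->
  is_derive x 1 (fun s => f s * g s) (f x * b + g x * a).
Proof. move=> Df Dg; have := is_deriveM Df Dg; exact: is_derive_ext. Qed.
Lemma sV f x a : f x != 0 -> is_derive x 1 f a ->
  is_derive x 1 (fun s => (f s)^-1) (- a / (f x)^+2).
Proof.
move=> fx Df; have := is_deriveV fx Df => D.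
have -> : - a / (f x)^+2 = - (f x)^-2 *: a.
  change (- a / (f x)^+2 = (- (f x)^-2) * a). by rewrite !mulNr; congr (- _); exact: mulrC.
exact D.
Qed.
Lemma sId x : is_derive x 1 (fun s : R => s) 1.
Proof. exact: (is_derive_id x 1). Qed.
Lemma sC x (c : R) : is_derive x 1 (fun _ : R => c) 0.
Proof. exact: is_derive_cst. Qed.
Lemma sSqrt f x a : 0 < f x -> is_derive x 1 f a ->
  is_derive x 1 (fun s => Num.sqrt (f s)) (a / (2 * Num.sqrt (f x))).
Proof.
move=> fx Df; have := is_derive1_comp (is_derive1_sqrt fx) Df.
rewrite mulrC; exact: is_derive_ext.
Qed.
End scal.

Definition sqf (r s : R) := Num.sqrt (r ^+ 2 + s ^+ 2).

Lemma sqf_gt0 (r s : R) : 0 < r -> 0 < sqf r s.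
Proof.
by move=> r0; rewrite /sqf sqrtr_gt0; apply: ltr_wpDr; [exact: sqr_ge0|exact: exprn_gt0].
Qed.
Lemma sqf_sqr (r s : R) : 0 < r -> sqf r s ^+ 2 = r ^+ 2 + s ^+ 2.
Proof. by move=> r0; rewrite /sqf sqr_sqrtr // addr_ge0 // sqr_ge0. Qed.
Lemma sqf0 (r : R) : 0 < r -> sqf r 0 = r.
Proof. by move=> r0; rewrite /sqf expr0n /= addr0 sqrtr_sqr gtr0_norm. Qed.

Lemma is_derive_sqf (r s : R) : 0 < r -> is_derive s 1 (sqf r) (s * (sqf r s)^-1).
Proof.
move=> r0.
have h : 0 < r ^+ 2 + s ^+ 2.
  by apply: ltr_wpDr; [exact: sqr_ge0|exact: exprn_gt0].
have := @sSqrt (fun s => r ^+ 2 + s * s) s _ h (sD (sC s (r ^+ 2)) (sM (sId s) (sId s))).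
move=> D.
have -> : sqf r = fun z => Num.sqrt (r ^+ 2 + z * z) by apply/funext => z; rewrite /sqf expr2.
refine (is_derive_eq D _).
rewrite -expr2 -/(sqf r s).
have := sqf_gt0 s r0; rewrite lt0r => /andP[nz _].
by field; rewrite nz.
Qed.
Lemma D2s_aff (a d x : R) : D2s (fun s => a + d * s) x (fun _ => d) 0.
Proof.
split; last exact: sC.
apply: filterE => s.
refine (is_derive_eq (sD (sC s a) (sM (sC s d) (sId s))) _).
by ring.
Qed.

Lemma Dw (r s : R) : 0 < r -> is_derive s 1 (fun s => (sqf r s)^-1)
  (- (s * ((sqf r s)^-1 * ((sqf r s)^-1 * (sqf r s)^-1)))).
Proof.
move=> r0.
have nz : sqf r s != 0 by rewrite gt_eqF // sqf_gt0.
refine (is_derive_eq (sV nz (is_derive_sqf s r0)) _).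
by field.
Qed.

Lemma D2s_rho (r : R) : 0 < r -> D2s (sqf r) 0 (fun s => s * (sqf r s)^-1) r^-1.
Proof.
move=> r0; split.
  by apply: filterE => s; exact: is_derive_sqf.
refine (is_derive_eq (sM (sId 0) (Dw 0 r0)) _).
rewrite sqf0 //; have rn : r != 0 by rewrite gt_eqF.
by field.
Qed.

Lemma D2s_u (r c : R) : 0 < r -> D2s (fun s => c * (sqf r s)^-1) 0
  (fun s => - c * (s * ((sqf r s)^-1 * ((sqf r s)^-1 * (sqf r s)^-1)))) (- c / r ^+ 3).
Proof.
move=> r0; split.
  apply: filterE => s.
  refine (is_derive_eq (sM (sC s c) (Dw s r0)) _).
  by ring.
refine (is_derive_eq (sM (sC 0 (- c)) (sM (sId 0) (sM (Dw 0 r0) (sM (Dw 0 r0) (Dw 0 r0))))) _).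
rewrite sqf0 //; have rn : r != 0 by rewrite gt_eqF.
by field.
Qed.

Lemma D2s_v (r : R) : 0 < r -> D2s (fun s => s * (sqf r s)^-1) 0
  (fun s => (sqf r s)^-1 - s * (s * ((sqf r s)^-1 * ((sqf r s)^-1 * (sqf r s)^-1)))) 0.
Proof.
move=> r0; split.
  apply: filterE => s.
  refine (is_derive_eq (sM (sId s) (Dw s r0)) _).
  by ring.
have := sD (Dw 0 r0) (sM (sC 0 (-1)) (sM (sId 0) (sM (sId 0) (sM (Dw 0 r0) (sM (Dw 0 r0) (Dw 0 r0)))))) => D.
refine (is_derive_eq (is_derive_ext _ D) _).
  by move=> s /=; ring.
by ring.
Qed.

End S.


Section S7.
Variable R : realType.
Local Notation D2 := (@D2 R).
Local Notation sId := (@sId R).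
Lemma derive_near_eq1 (F G : R -> 'rV[R]_4) (s : R) (d : 'rV[R]_4) :
  (\forall z \near s, F z = G z) -> is_derive s 1 G d -> 'D_1 F s = d.
Proof.
move=> FG [_ <-].
exact: near_eq_derive.
Qed.



Lemma D2_key (F G G1 : R -> 'rV[R]_4) (G2 : 'rV[R]_4) :
  D2 G 0 G1 G2 -> (\forall s \near 0, F s = G s) ->
  'D_1 (fun s => 'D_1 F s) 0 = G2.
Proof.
move=> [HG HG2] FG.
have E : \forall s \near (0 : R), 'D_1 F s = G1 s.
  move: (near_join FG) HG; apply: filterS2 => s FGs Gs.
  exact: derive_near_eq1 FGs Gs.
exact: derive_near_eq1 E HG2.
Qed.



Lemma partial2_line (n : nat) (F : 'rV[R]_n -> 'rV[R]_4) (i : 'I_n) (c : 'rV[R]_n) :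
  partial i (partial i F) c =
  'D_1 (fun s : R => 'D_1 (fun z : R => F (c + z *: delta_mx ord0 i)) s) 0.
Proof.
pose g := partial i F.
pose v : 'rV[R]_n := delta_mx ord0 i.
have h1 := @derive_line R n g c v (0 : R).
rewrite scale0r addr0 in h1.
have h2 : (fun s : R => g (c + s *: v)) = (fun s : R => 'D_1 (fun z : R => F (c + z *: v)) s).
  by apply/funext => s; rewrite /g (@derive_line R n F c v s).
rewrite h2 in h1.
exact: (esym h1).
Qed.



Lemma D2_line (F : 'rV[R]_2 -> 'rV[R]_4) (i : 'I_2) (b : 'rV[R]_2) (x : R) :
  (\forall s \near x, derivable F (b + s *: delta_mx ord0 i) (delta_mx ord0 i)) ->
  derivable (partial i F) (b + x *: delta_mx ord0 i) (delta_mx ord0 i) ->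
  D2 (fun s => F (b + s *: delta_mx ord0 i)) x (fun s => partial i F (b + s *: delta_mx ord0 i))
     (partial i (partial i F) (b + x *: delta_mx ord0 i)).
Proof.
move=> HF HF2; split.
  move: HF; apply: filterS => s Ds; apply: DeriveDef.
    exact/derivable_line.
  by rewrite derive_line.
apply: DeriveDef.
  by apply/(derivable_line (partial i F)).
by rewrite (derive_line (partial i F)).
Qed.



Lemma sum4 (V : zmodType) (F : 'I_4 -> V) : \sum_(i < 4) F i = F 0 + F 1 + F 2 + F 3.
Proof.
rewrite !big_ord_recr big_ord0 /=.
congr (_ + _ + _ + _); rewrite ?add0r; f_equal; apply: val_inj; by [].
Qed.



Lemma open_line (U : set 'rV[R]_4) (a v : 'rV[R]_4) (x : R) :
  open U -> U (a + x *: v) -> \forall t \near x, U (a + t *: v).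
Proof.
move=> Uo Ux.
have D : is_derive x 1 (fun t => a + t *: v) v.
  have := is_deriveD (is_derive_cst a x 1) (is_deriveZ_fun (sId x) (is_derive_cst v x 1)).
  rewrite add0r scaler0 add0r scale1r; exact: is_derive_ext.
have c := is_derive_cont D.
rewrite openE in Uo.
exact: (c _ (Uo _ Ux)).
Qed.





End S7.


Section M.
Variable R : realType.

Lemma p2D (X Y : 'rV[R]_2) k : (X + Y) ord0 k = X ord0 k + Y ord0 k.
Proof. by rewrite mxE. Qed.
Lemma p2Z (a : R) (X : 'rV[R]_2) k : (a *: X) ord0 k = a * X ord0 k.
Proof. by rewrite mxE. Qed.

Lemma pt2_e1 (a t : R) : pt2 a t = pt2 a 0 + t *: delta_mx ord0 (1 : 'I_2).
Proof. by apply: p2eqP; rewrite !p2D !p2Z ?pt2_0 ?pt2_1 ?e2_10 ?e2_11; ring. Qed.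
Lemma pt2_e0 (t b : R) : pt2 t b = pt2 0 b + t *: delta_mx ord0 (0 : 'I_2).
Proof. by apply: p2eqP; rewrite !p2D !p2Z ?pt2_0 ?pt2_1 ?e2_00 ?e2_01; ring. Qed.

Lemma qreal_mkq (u : R) : qreal u = mkq u 0 0 0.
Proof. by rewrite /qreal qe_mkq0; apply: qeqP; rewrite !qcE; ring. Qed.

Lemma qmul_linl (a b : R) (P Q X : 'rV[R]_4) :
  qmul (a *: P + b *: Q) X = a *: qmul P X + b *: qmul Q X.
Proof. by rewrite /qmul; apply: qeqP; rewrite !qcE; ring. Qed.

Lemma pos_near (f : R -> R) (x df : R) : is_derive x 1 f df -> 0 < f x ->
  \forall s \near x, 0 < f s.
Proof. move=> D fx; have c := is_derive_cont D; exact: (c _ (lt_nbhsr fx)). Qed.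

End M.


Section M.
Variable R : realType.

Lemma main_eps (U : set 'rV[R]_4) (ft : 'rV[R]_4 -> 'rV[R]_4) (A B : 'rV[R]_2 -> 'rV[R]_4) (q0 r eps : R) :
  open U -> (forall q, U q -> laplacian ft q = 0) ->
  (forall (q0 r : R) (w : 'rV[R]_4), qsphere w -> 0 < r -> U (qax q0 r w) ->
     ft (qax q0 r w) = A (pt2 q0 r) + qmul w (B (pt2 q0 r))) ->
  Ck 2 (axial_domain U) A -> Ck 2 (axial_domain U) B ->
  0 < r -> (eps = 1 \/ eps = -1) -> U (qax q0 r (eps *: qe R 1)) ->
  (partial 0 (partial 0 A) (pt2 q0 r) + partial 1 (partial 1 A) (pt2 q0 r)
      + (2 / r) *: partial 1 A (pt2 q0 r)) +
  qmul (eps *: qe R 1) (partial 0 (partial 0 B) (pt2 q0 r) + partial 1 (partial 1 B) (pt2 q0 r)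
      + (r ^+ 2)^-1 *: ((2 * r) *: partial 1 B (pt2 q0 r) - 2 *: B (pt2 q0 r))) = 0.
Proof.
move=> Uo Hlap Hrep HA HB r0 heps Uc.
have rn : r != 0 by rewrite gt_eqF.
have sJ0 : qsphere (eps *: qe R 1).
  by split; rewrite qe_mkq1 !qcE; [ring | case: heps => ->; ring].
have Dom : forall a t, 0 < t -> U (qax a t (eps *: qe R 1)) -> axial_domain U (pt2 a t).
  move=> a t t0 Ut; split; rewrite pt2_1 //; exists (eps *: qe R 1); split => //.
  by rewrite pt2_0.
have dA : forall i x, axial_domain U x -> derivable A x (delta_mx ord0 i).
  by move=> i x Dx; case: HA => _ /(_ i) [] /(_ x Dx).
have dA2 : forall i x, axial_domain U x -> derivable (partial i A) x (delta_mx ord0 i).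
  by move=> i x Dx; case: HA => _ /(_ i) [] _ [] _ /(_ i) [] /(_ x Dx).
have dB : forall i x, axial_domain U x -> derivable B x (delta_mx ord0 i).
  by move=> i x Dx; case: HB => _ /(_ i) [] /(_ x Dx).
have dB2 : forall i x, axial_domain U x -> derivable (partial i B) x (delta_mx ord0 i).
  by move=> i x Dx; case: HB => _ /(_ i) [] _ [] _ /(_ i) [] /(_ x Dx).
have Nq : \forall t \near q0, axial_domain U (pt2 0 r + t *: delta_mx ord0 (0 : 'I_2)).
  have U1 : U (r *: (eps *: qe R 1) + q0 *: qe R 0) by rewrite addrC.
  move: (open_line Uo U1); apply: filterS => t Ut.
  by rewrite -pt2_e0; apply: Dom => //; rewrite /qax /qreal addrC.
have Nr : \forall t \near r, axial_domain U (pt2 q0 0 + t *: delta_mx ord0 (1 : 'I_2)).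
  move: (open_line Uo Uc) (lt_nbhsr r0); apply: filterS2 => t Ut t0.
  by rewrite -pt2_e1; apply: Dom.
have pq0 : pt2 0 r + q0 *: delta_mx ord0 (0 : 'I_2) = pt2 q0 r :> 'rV[R]_2 by rewrite -pt2_e0.
have pr : pt2 q0 0 + r *: delta_mx ord0 (1 : 'I_2) = pt2 q0 r :> 'rV[R]_2 by rewrite -pt2_e1.
have NqA : \forall t \near q0, derivable A (pt2 0 r + t *: delta_mx ord0 0) (delta_mx ord0 (0 : 'I_2)).
  by move: Nq; apply: filterS => t; exact: dA.
have NqB : \forall t \near q0, derivable B (pt2 0 r + t *: delta_mx ord0 0) (delta_mx ord0 (0 : 'I_2)).
  by move: Nq; apply: filterS => t; exact: dB.
have NrA : \forall t \near r, derivable A (pt2 q0 0 + t *: delta_mx ord0 1) (delta_mx ord0 (1 : 'I_2)).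
  by move: Nr; apply: filterS => t; exact: dA.
have NrB : \forall t \near r, derivable B (pt2 q0 0 + t *: delta_mx ord0 1) (delta_mx ord0 (1 : 'I_2)).
  by move: Nr; apply: filterS => t; exact: dB.
have HAq := D2_line NqA (dA2 0 _ (nbhs_singleton Nq)).
have HBq := D2_line NqB (dB2 0 _ (nbhs_singleton Nq)).
have HAr := D2_line NrA (dA2 1 _ (nbhs_singleton Nr)).
have HBr := D2_line NrB (dB2 1 _ (nbhs_singleton Nr)).
rewrite pq0 in HAq HBq; rewrite pr in HAr HBr.
pose c := qax q0 r (eps *: qe R 1).
have rxy0 : q0 + 1 * 0 = q0 by rewrite mulr0 addr0.
have DG0 := D2_add (D2_comp (rho := fun s => q0 + 1 * s) rxy0 (D2s_aff q0 1 0) HAq)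
   (D2_qmul (eps *: qe R 1) (D2_comp (rho := fun s => q0 + 1 * s) rxy0 (D2s_aff q0 1 0) HBq)).
have N0 : \forall s \near 0, ft (c + s *: qe R 0) =
   A (pt2 0 r + (q0 + 1 * s) *: delta_mx ord0 (0 : 'I_2)) +
   qmul (eps *: qe R 1) (B (pt2 0 r + (q0 + 1 * s) *: delta_mx ord0 (0 : 'I_2))).
  have U0 : U (c + 0 *: qe R 0) by rewrite scale0r addr0.
  move: (open_line Uo U0); apply: filterS => s Us.
  have eq : c + s *: qe R 0 = qax (q0 + 1 * s) r (eps *: qe R 1).
    by rewrite /c /qax /qreal qe_mkq0 qe_mkq1; apply: qeqP; rewrite !qcE; ring.
  by rewrite eq in Us *; rewrite Hrep // -pt2_e0.
have E0 := D2_key DG0 N0.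
have rxy1 : r + eps * 0 = r by rewrite mulr0 addr0.
have DG1 := D2_add (D2_comp (rho := fun s => r + eps * s) rxy1 (D2s_aff r eps 0) HAr)
   (D2_qmul (eps *: qe R 1) (D2_comp (rho := fun s => r + eps * s) rxy1 (D2s_aff r eps 0) HBr)).
have N1 : \forall s \near 0, ft (c + s *: qe R 1) =
   A (pt2 q0 0 + (r + eps * s) *: delta_mx ord0 (1 : 'I_2)) +
   qmul (eps *: qe R 1) (B (pt2 q0 0 + (r + eps * s) *: delta_mx ord0 (1 : 'I_2))).
  have U0 : U (c + 0 *: qe R 1) by rewrite scale0r addr0.
  have P0 : 0 < r + eps * 0 by rewrite rxy1.
  move: (open_line Uo U0) (pos_near (nbhs_singleton (D2s_aff r eps 0).1) P0).
  apply: filterS2 => s Us Ps.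
  have eq : c + s *: qe R 1 = qax q0 (r + eps * s) (eps *: qe R 1).
    rewrite /c /qax /qreal qe_mkq0 qe_mkq1; apply: qeqP; rewrite !qcE; try ring.
    by case: heps => ->; ring.
  by rewrite eq in Us *; rewrite Hrep // -pt2_e1.
have E1 := D2_key DG1 N1.
have DG2 := D2_add (D2_add (D2_comp (rho := sqf r) (@sqf0 R r r0) (@D2s_rho R r r0) HAr)
     (D2_Z (@D2s_u R r (eps * r) r0) (D2_qmul (qe R 1) (D2_comp (rho := sqf r) (@sqf0 R r r0) (@D2s_rho R r r0) HBr))))
   (D2_Z (@D2s_v R r r0) (D2_qmul (qe R 2) (D2_comp (rho := sqf r) (@sqf0 R r r0) (@D2s_rho R r r0) HBr))).
have N2 : \forall s \near 0, ft (c + s *: qe R 2) =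
   A (pt2 q0 0 + sqf r s *: delta_mx ord0 (1 : 'I_2)) +
   (eps * r * (sqf r s)^-1) *: qmul (qe R 1) (B (pt2 q0 0 + sqf r s *: delta_mx ord0 (1 : 'I_2))) +
   (s * (sqf r s)^-1) *: qmul (qe R 2) (B (pt2 q0 0 + sqf r s *: delta_mx ord0 (1 : 'I_2))).
  have U0 : U (c + 0 *: qe R 2) by rewrite scale0r addr0.
  move: (open_line Uo U0); apply: filterS => s Us.
  have rs0 := @sqf_gt0 R r s r0.
  have rsn : sqf r s != 0 by rewrite gt_eqF.
  pose J := (eps * r * (sqf r s)^-1) *: qe R 1 + (s * (sqf r s)^-1) *: qe R 2.
  have eq : c + s *: qe R 2 = qax q0 (sqf r s) J.
    by rewrite /c /J /qax /qreal qe_mkq0 qe_mkq1 qe_mkq2; apply: qeqP; rewrite !qcE; field.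
  have sJ : qsphere J.
    split; rewrite /J qe_mkq1 qe_mkq2 !qcE; first by ring.
    transitivity ((eps * r * (sqf r s)^-1) ^+ 2 + (s * (sqf r s)^-1) ^+ 2); first by ring.
    have -> : (eps * r * (sqf r s)^-1) ^+ 2 + (s * (sqf r s)^-1) ^+ 2 =
       (eps ^+ 2 * r ^+ 2 + s ^+ 2) / sqf r s ^+ 2 by field.
    have -> : eps ^+ 2 = 1 by case: heps => ->; ring.
    by rewrite mul1r -(@sqf_sqr R r s r0) divff // expf_neq0.
  rewrite eq in Us *; rewrite Hrep // /J qmul_linl -pt2_e1.
  by rewrite addrA.
have E2 := D2_key DG2 N2.
have DG3 := D2_add (D2_add (D2_comp (rho := sqf r) (@sqf0 R r r0) (@D2s_rho R r r0) HAr)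
     (D2_Z (@D2s_u R r (eps * r) r0) (D2_qmul (qe R 1) (D2_comp (rho := sqf r) (@sqf0 R r r0) (@D2s_rho R r r0) HBr))))
   (D2_Z (@D2s_v R r r0) (D2_qmul (qe R 3) (D2_comp (rho := sqf r) (@sqf0 R r r0) (@D2s_rho R r r0) HBr))).
have N3 : \forall s \near 0, ft (c + s *: qe R 3) =
   A (pt2 q0 0 + sqf r s *: delta_mx ord0 (1 : 'I_2)) +
   (eps * r * (sqf r s)^-1) *: qmul (qe R 1) (B (pt2 q0 0 + sqf r s *: delta_mx ord0 (1 : 'I_2))) +
   (s * (sqf r s)^-1) *: qmul (qe R 3) (B (pt2 q0 0 + sqf r s *: delta_mx ord0 (1 : 'I_2))).
  have U0 : U (c + 0 *: qe R 3) by rewrite scale0r addr0.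
  move: (open_line Uo U0); apply: filterS => s Us.
  have rs0 := @sqf_gt0 R r s r0.
  have rsn : sqf r s != 0 by rewrite gt_eqF.
  pose J := (eps * r * (sqf r s)^-1) *: qe R 1 + (s * (sqf r s)^-1) *: qe R 3.
  have eq : c + s *: qe R 3 = qax q0 (sqf r s) J.
    by rewrite /c /J /qax /qreal qe_mkq0 qe_mkq1 qe_mkq3; apply: qeqP; rewrite !qcE; field.
  have sJ : qsphere J.
    split; rewrite /J qe_mkq1 qe_mkq3 !qcE; first by ring.
    transitivity ((eps * r * (sqf r s)^-1) ^+ 2 + (s * (sqf r s)^-1) ^+ 2); first by ring.
    have -> : (eps * r * (sqf r s)^-1) ^+ 2 + (s * (sqf r s)^-1) ^+ 2 =
       (eps ^+ 2 * r ^+ 2 + s ^+ 2) / sqf r s ^+ 2 by field.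
    have -> : eps ^+ 2 = 1 by case: heps => ->; ring.
    by rewrite mul1r -(@sqf_sqr R r s r0) divff // expf_neq0.
  rewrite eq in Us *; rewrite Hrep // /J qmul_linl -pt2_e1.
  by rewrite addrA.
have E3 := D2_key DG3 N3.
have L := Hlap c Uc.
rewrite /laplacian sum4 !partial2_line in L.
rewrite E0 E1 E2 E3 in L.
rewrite -L. cbv beta. rewrite !(@sqf0 R r r0) ?pq0 ?pr. move: (partial 0 (partial 0 A) (pt2 q0 r)) => a00.
move: (partial 1 (partial 1 A) (pt2 q0 r)) => a11.
move: (partial 0 (partial 0 B) (pt2 q0 r)) => b00.
move: (partial 1 (partial 1 B) (pt2 q0 r)) => b11.
move: (partial 0 A (pt2 q0 r)) => a0.
move: (partial 1 A (pt2 q0 r)) => a1.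
move: (partial 0 B (pt2 q0 r)) => b0.
move: (partial 1 B (pt2 q0 r)) => b1.
move: (B (pt2 q0 r)) => bb.
rewrite /qmul ?qe_mkq1 ?qe_mkq2 ?qe_mkq3.
apply: qeqP; rewrite !qcE.
all: by case: heps => ->; field.
Qed.

End M.


Lemma qmulZl (R : realType) (k : R) (P X : 'rV[R]_4) : qmul (k *: P) X = k *: qmul P X.
Proof. by rewrite /qmul; apply: qeqP; rewrite !qcE; ring. Qed.

Lemma qmul_e1e1 (R : realType) (X : 'rV[R]_4) : qmul (qe R 1) (qmul (qe R 1) X) = - X.
Proof. by rewrite /qmul qe_mkq1; apply: qeqP; rewrite !qcE; ring. Qed.

Lemma qmul_0r (R : realType) (P : 'rV[R]_4) : qmul P 0 = 0.
Proof. by rewrite /qmul; apply: qeqP; rewrite !qcE; ring. Qed.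

Unset Implicit Arguments.
Set Strict Implicit.

Theorem theorem3p4 (R : realType) (U : set 'rV[R]_4)
  (ft : 'rV[R]_4 -> 'rV[R]_4) (A B : 'rV[R]_2 -> 'rV[R]_4) :
  open U -> axially_symmetric U -> (forall u : R, ~ U (qreal u)) ->
  axially_harmonic U ft ->
  (forall (q0 r : R) (w : 'rV[R]_4), qsphere w -> 0 < r -> U (qax q0 r w) ->
     ft (qax q0 r w) = A (pt2 q0 r) + qmul w (B (pt2 q0 r))) ->
  Ck 2 (axial_domain U) A -> Ck 2 (axial_domain U) B ->
  forall p : 'rV[R]_2, axial_domain U p ->
    let r := p ord0 (inord 1) in
    partial 0 (partial 0 A) p + partial 1 (partial 1 A) p
      + (2 / r) *: partial 1 A p = 0 /\
    partial 0 (partial 0 B) p + partial 1 (partial 1 B) p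
      + (r ^+ 2)^-1 *: ((2 * r) *: partial 1 B p - 2 *: B p) = 0.
Proof.
move=> Uo Hsym _ [f [_ [_ [_ Hlap]]]] Hrep HA HB p [r0 [w [sw Uw]]] r.
have hp : p = pt2 (p ord0 (inord 0)) r.
  by apply: p2eqP; rewrite ?pt2_0 ?pt2_1.
have sJ : forall eps : R, (eps = 1 \/ eps = -1) -> qsphere (eps *: qe R 1).
  by move=> eps heps; split; rewrite qe_mkq1 !qcE; [ring | case: heps => ->; ring].
have Ue : forall eps : R, (eps = 1 \/ eps = -1) ->
    U (qax (p ord0 (inord 0)) r (eps *: qe R 1)).
  by move=> eps heps; apply: (Hsym _ _ w) => //; exact: sJ.
have H1 := main_eps Uo Hlap Hrep HA HB r0 (or_introl erefl) (Ue 1 (or_introl erefl)).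
have H2 := main_eps Uo Hlap Hrep HA HB r0 (or_intror erefl) (Ue (-1) (or_intror erefl)).
rewrite -hp in H1 H2.
rewrite !qmulZl scale1r in H1; rewrite !qmulZl scaleN1r in H2.
move: H1 H2.
set X := (X in X + _ = 0 -> _).
set Y := (Y in _ + qmul _ Y = 0 -> _).
move=> H1 H2.
have c1 : forall m, qc X m + qc (qmul (qe R 1) Y) m = 0.
  by move=> m; rewrite -qcD H1 qc0.
have c2 : forall m, qc X m - qc (qmul (qe R 1) Y) m = 0.
  by move=> m; rewrite -qcB H2 qc0.
have HX : X = 0.
  apply: qeqP; rewrite !qc0;
    [move: (c1 0%N) (c2 0%N) | move: (c1 1%N) (c2 1%N) | move: (c1 2%N) (c2 2%N) | move: (c1 3%N) (c2 3%N)]; lra.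
split; first exact: HX.
have HZ : qmul (qe R 1) Y = 0 by move: H1; rewrite HX add0r.
have HY : Y = 0 by rewrite -[Y]opprK -(qmul_e1e1 Y) HZ qmul_0r oppr0.
exact: HY.
Qed.
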